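(* Every locally residually sofic monoid is sofic. In particular, every residually sofic monoid is sofic.
   Context: A monoid $M$ is residually sofic if for any distinct $s_1,s_2\in M$ there exist a sofic monoid $N$ and a monoid morphism (preserving identities) $\varphi\colon M\to N$ with $\varphi(s_1)\ne\varphi(s_2)$; $M$ is locally residually sofic if every finitely generated submonoid of $M$ is residually sofic. For a non-empty finite set $X$, $\mathrm{Map}(X)$ is the monoid of all maps $X\to X$ under composition (identity $\mathrm{Id}_X$) with the Hamming metric $d_X(f,g)=|\{x\in X : f(x)\ne g(x)\}|/|X|$. For a monoid $M$, finite $K\subset M$ and $\varepsilon,\alpha>0$, a map $\varphi\colon M\to\mathrm{Map}(X)$ is a $(K,\varepsilon)$-morphism if $d_X(\varphi(k_1k_2),\varphi(k_1)\varphi(k_2))\le\varepsilon$ for all $k_1,k_2\in K$ and $d_X(\varphi(1_M),\mathrm{Id}_X)\le\varepsilon$; it is $(K,\alpha)$-injective if $d_X(\varphi(k_1),\varphi(k_2))\ge\alpha$ for all distinct $k_1,k_2\in K$. $M$ is sofic if for every finite $K\subset M$ and every $\varepsilon>0$ there exist a non-empty finite set $X$ and a $(K,1-\varepsilon)$-injective $(K,\varepsilon)$-morphism $\varphi\colon M\to\mathrm{Map}(X)$. *)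

(* Defs.v *)
From Stdlib Require Import Reals List ProofIrrelevance.
From mathcomp Require Import all_boot.

Set Implicit Arguments.
Unset Strict Implicit.
Unset Printing Implicit Defensive.

Record monoid := Monoid {
  mcarrier :> Type;
  mmul : mcarrier -> mcarrier -> mcarrier;
  mone : mcarrier;
  mmulA : forall x y z, mmul x (mmul y z) = mmul (mmul x y) z;
  mmul1x : forall x, mmul mone x = x;
  mmulx1 : forall x, mmul x mone = x
}.

Definition is_monoid_morphism (M N : monoid) (f : M -> N) : Prop :=
  (forall x y, f (mmul x y) = mmul (f x) (f y)) /\ f (mone M) = mone N.

Definition hdist (X : finType) (f g : X -> X) : R :=
  Rdiv (INR #|[pred x | f x != g x]|) (INR #|X|).

(* Product in Map(X) is composition: (f g)(x) = f (g x); finite subsets K of M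
   are given as lists. *)
Definition sofic (M : monoid) : Prop :=
  forall (K : list M) (eps : R), Rlt 0 eps ->
  exists (X : finType) (phi : M -> X -> X),
    (0 < #|X|)%N /\
    (forall k1 k2, In k1 K -> In k2 K ->
       Rle (hdist (phi (mmul k1 k2)) (phi k1 \o phi k2)) eps) /\
    Rle (hdist (phi (mone M)) (fun x => x)) eps /\
    (forall k1 k2, In k1 K -> In k2 K -> k1 <> k2 ->
       Rle (Rminus 1 eps) (hdist (phi k1) (phi k2))).

Definition residually_sofic (M : monoid) : Prop :=
  forall s1 s2 : M, s1 <> s2 ->
  exists (N : monoid) (phi : M -> N),
    sofic N /\ is_monoid_morphism phi /\ phi s1 <> phi s2.

Inductive gen (M : monoid) (S : list M) : M -> Prop :=
| gen_one : gen S (mone M)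
| gen_elt s : In s S -> gen S s
| gen_mul x y : gen S x -> gen S y -> gen S (mmul x y).

Section Submonoid.
Variables (M : monoid) (S : list M).

Definition sub_carrier := {x : M | gen S x}.

Definition sub_mul (a b : sub_carrier) : sub_carrier :=
  exist _ (mmul (proj1_sig a) (proj1_sig b))
        (gen_mul (proj2_sig a) (proj2_sig b)).

Definition sub_one : sub_carrier := exist _ (mone M) (gen_one S).

Lemma sub_eq (a b : sub_carrier) : proj1_sig a = proj1_sig b -> a = b.
Proof.
case: a b => [x px] [y py] /= exy; subst y.
by rewrite (proof_irrelevance _ px py).
Qed.

Lemma sub_mulA x y z : sub_mul x (sub_mul y z) = sub_mul (sub_mul x y) z.
Proof. by apply: sub_eq; rewrite /= mmulA. Qed.

Lemma sub_mul1x x : sub_mul sub_one x = x.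
Proof. by apply: sub_eq; rewrite /= mmul1x. Qed.

Lemma sub_mulx1 x : sub_mul x sub_one = x.
Proof. by apply: sub_eq; rewrite /= mmulx1. Qed.

Definition gen_submonoid : monoid :=
  Monoid sub_mulA sub_mul1x sub_mulx1.

End Submonoid.

Definition locally_residually_sofic (M : monoid) : Prop :=
  forall S : list M, residually_sofic (gen_submonoid S).

(* Main.v *)
Require Import Defs.
From Stdlib Require Import Reals List Lra ClassicalEpsilon Classical.
From mathcomp Require Import all_boot.
Local Open Scope R_scope.

Lemma hdistE (X : finType) (f g : X -> X) : (0 < #|X|)%N ->
  hdist f g = (1 - INR #|[pred x | f x == g x]| / INR #|X|).
Proof.
move=> hX; rewrite /hdist.
have hc := cardC [pred x | f x == g x].
have -> : #|[pred x | f x != g x]| = #|[predC [pred x | f x == g x]]|.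
  by apply: eq_card => x.
have hn : 0 < INR #|X| by apply: lt_0_INR; apply/ltP.
have hR : INR #|[pred x | f x == g x]| + INR #|[predC [pred x | f x == g x]]| = INR #|X|.
  by rewrite -plus_INR; apply: f_equal; exact: hc.
move: hR hn; generalize (INR #|[pred x | f x == g x]|) (INR #|[predC [pred x | f x == g x]]|) (INR #|X|) => a b n hR hn.
rewrite -hR; rewrite -hR in hn; field; lra.
Qed.

Lemma hdist_bounds (X : finType) (f g : X -> X) : (0 < #|X|)%N ->
  (0 <= INR #|[pred x | f x == g x]| / INR #|X| <= 1).
Proof.
move=> hX.
have hn : (0 < INR #|X|) by apply: lt_0_INR; apply/ltP.
have hle : (INR #|[pred x | f x == g x]| <= INR #|X|).
  by apply: le_INR; apply/leP; apply: max_card.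
split.
  by apply: Rmult_le_pos; [apply: pos_INR| apply: Rlt_le; apply: Rinv_0_lt_compat].
apply (Rmult_le_reg_r (INR #|X|)) => //.
rewrite /Rdiv Rmult_assoc Rinv_l; lra.
Qed.

Lemma hdist_ext (X : finType) (f g f' g' : X -> X) :
  f =1 f' -> g =1 g' -> hdist f g = hdist f' g'.
Proof.
move=> hf hg; rewrite /hdist; congr (Rdiv (INR _) _).
by apply: eq_card => x; rewrite !inE hf hg.
Qed.

Lemma hdist0 (X : finType) (f g : X -> X) : f =1 g -> hdist f g = 0.
Proof.
move=> hfg; rewrite /hdist.
have -> : #|[pred x | f x != g x]| = 0%N.
  by apply: eq_card0 => x; rewrite !inE hfg eqxx.
by rewrite /= /Rdiv Rmult_0_l.
Qed.

Lemma hdist_prod (X1 X2 : finType) (f1 g1 : X1 -> X1) (f2 g2 : X2 -> X2) :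
  (0 < #|X1|)%N -> (0 < #|X2|)%N ->
  let d := hdist (X := prod X1 X2) (fun p => (f1 p.1, f2 p.2)) (fun p => (g1 p.1, g2 p.2)) in
  (d <= hdist f1 g1 + hdist f2 g2 /\ hdist f1 g1 <= d /\ hdist f2 g2 <= d).
Proof.
move=> h1 h2 d.
have h12 : (0 < #|{: X1 * X2}|)%N by rewrite card_prod muln_gt0 h1.
have hb1 := hdist_bounds _ f1 g1 h1.
have hb2 := hdist_bounds _ f2 g2 h2.
have hn1 : (0 < INR #|X1|) by apply: lt_0_INR; apply/ltP.
have hn2 : (0 < INR #|X2|) by apply: lt_0_INR; apply/ltP.
have hd : d = (1 - (INR #|[pred x | f1 x == g1 x]| / INR #|X1|) *
                  (INR #|[pred x | f2 x == g2 x]| / INR #|X2|)).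
  rewrite /d hdistE // card_prod.
  have -> : #|[pred x : X1 * X2 | (f1 x.1, f2 x.2) == (g1 x.1, g2 x.2)]| =
            (#|[pred x | f1 x == g1 x]| * #|[pred x | f2 x == g2 x]|)%N.
    rewrite -cardX; by apply: eq_card => -[x y].
  rewrite !mult_INR.
  move: hn1 hn2; generalize (INR #|[pred x | f1 x == g1 x]|) (INR #|[pred x | f2 x == g2 x]|) (INR #|X1|) (INR #|X2|) => a b c e hc he.
  field; lra.
rewrite hd (hdistE _ f1) // (hdistE _ f2) //.
move: hb1 hb2.
set u := (INR _ / INR _). set v := (INR _ / INR _).
move=> hb1 hb2; split; [|split]; nra.
Qed.

Lemma res_step (M : monoid) (HM : residually_sofic M) (K : list M) (e : R) (he : 0 < e) :
 forall L : list (M * M), (forall p, In p L -> In (fst p) K /\ In (snd p) K) ->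
 exists (X : finType) (phi : M -> X -> X), (0 < #|X|)%N /\
 (forall k1 k2, In k1 K -> In k2 K ->
    hdist (phi (mmul k1 k2)) (phi k1 \o phi k2) <= INR (length L) * e) /\
 hdist (phi (mone M)) (fun x => x) <= INR (length L) * e /\
 (forall a b, In (a, b) L -> a <> b -> 1 - e <= hdist (phi a) (phi b)).
Proof.
elim=> [|[a b] L IH] HL.
  exists (unit : finType), (fun _ x => x); split; first by rewrite card_unit.
  split; [move=> k1 k2 _ _; rewrite hdist0 //=; lra|].
  split; [rewrite hdist0 //=; lra|by []].
have [X1 [phi1 [hX1 [hm1 [hu1 hs1]]]]] : exists (X : finType) (phi : M -> X -> X), (0 < #|X|)%N /\
 (forall k1 k2, In k1 K -> In k2 K ->
    hdist (phi (mmul k1 k2)) (phi k1 \o phi k2) <= INR (length L) * e) /\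
 hdist (phi (mone M)) (fun x => x) <= INR (length L) * e /\
 (forall a b, In (a, b) L -> a <> b -> 1 - e <= hdist (phi a) (phi b)).
  by apply: IH => p hp; apply: HL; right.
have hlen : INR (length ((a, b) :: L)) * e = INR (length L) * e + e.
  change (length ((a, b) :: L)) with (S (length L)); rewrite S_INR; ring.
have [hab|hab] := classic (a = b).
  exists X1, phi1; split=> //; rewrite hlen; split; [|split].
  - by move=> k1 k2 h1 h2; move: (hm1 k1 k2 h1 h2); lra.
  - lra.
  - move=> a' b' [[ha hb]|hin] hne; [by subst; case: hne|exact: hs1].
have [haK hbK] := HL (a, b) (or_introl erefl).
have [N [psi [sN [[hpm hp1] hpab]]]] := HM a b hab.
have [X2 [phi2 [hX2 [hm2 [hu2 hs2]]]]] := sN (map psi K) e he.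
exists (prod X1 X2), (fun m p => (phi1 m p.1, phi2 (psi m) p.2)).
split; first by rewrite card_prod muln_gt0 hX1.
rewrite hlen; split; [|split].
- move=> k1 k2 h1 h2.
  have [hd _] := hdist_prod _ _ (phi1 (mmul k1 k2)) (phi1 k1 \o phi1 k2)
          (phi2 (psi (mmul k1 k2))) (phi2 (psi k1) \o phi2 (psi k2)) hX1 hX2.
  have := hm2 (psi k1) (psi k2) (in_map psi K k1 h1) (in_map psi K k2 h2).
  have := hm1 k1 k2 h1 h2.
  rewrite hpm in hd.
  move: hd; rewrite /=. move=> hd h3 h4.
  apply: Rle_trans _ (Rplus_le_compat _ _ _ _ h3 h4).
  apply: Rle_trans _ hd; right; rewrite hpm; apply: hdist_ext => -[x y] //.
- have [hd _] := hdist_prod _ _ (phi1 (mone M)) (fun x => x)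
          (phi2 (psi (mone M))) (fun x => x) hX1 hX2.
  rewrite hp1 in hd.
  apply: Rle_trans _ (Rplus_le_compat _ _ _ _ hu1 hu2).
  apply: Rle_trans _ hd; right; rewrite hp1; apply: hdist_ext => -[x y] //.
- move=> a' b' [[<- <-]|hin] hne.
  + have [_ [_ hd]] := hdist_prod _ _ (phi1 a) (phi1 b) (phi2 (psi a)) (phi2 (psi b)) hX1 hX2.
    apply: Rle_trans _ hd.
    exact: hs2 (in_map psi K a haK) (in_map psi K b hbK) hpab.
  + have [_ [hd _]] := hdist_prod _ _ (phi1 a') (phi1 b') (phi2 (psi a')) (phi2 (psi b')) hX1 hX2.
    apply: Rle_trans _ hd.
    exact: hs1.
Qed.

Lemma res_sofic (M : monoid) : residually_sofic M -> sofic M.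
Proof.
move=> HM K eps heps.
set L := list_prod K K.
have hn : 0 <= INR (length L) by apply: pos_INR.
set e := eps / (INR (length L) + 1).
have he : 0 < e by rewrite /e; apply: Rdiv_lt_0_compat; lra.
have hne : INR (length L) * e <= eps.
  rewrite /e; apply (Rmult_le_reg_r (INR (length L) + 1)); first lra.
  field_simplify; [nra|lra].
have hee : e <= eps.
  rewrite /e; apply (Rmult_le_reg_r (INR (length L) + 1)); first lra.
  field_simplify; [nra|lra].
have [X [phi [hX [hm [hu hs]]]]] := res_step _ HM K _ he L
  (fun p hp => let: conj h1 h2 := proj1 (in_prod_iff K K p.1 p.2) (eq_ind _ (fun q => In q L) hp _ (surjective_pairing p)) in conj h1 h2).
exists X, phi; split=> //; split; [|split].
- move=> k1 k2 h1 h2; apply: Rle_trans (hm k1 k2 h1 h2) hne.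
- exact: Rle_trans hu hne.
- move=> k1 k2 h1 h2 hne'; apply: Rle_trans (hs k1 k2 (in_prod K K k1 k2 h1 h2) hne').
  lra.
Qed.

Definition lift (M : monoid) (K : list M) (m : M) : gen_submonoid K :=
  match excluded_middle_informative (gen K m) with
  | left p => exist _ m p
  | right _ => sub_one K
  end.
Arguments lift {M}.

Lemma liftE (M : monoid) (K : list M) (m : M) (h : gen K m) :
  proj1_sig (lift K m) = m.
Proof. by rewrite /lift; case: excluded_middle_informative. Qed.
Arguments liftE {M K m}.

Lemma local_sofic (M : monoid) (K : list M) (eps : R) : 0 < eps ->
  sofic (gen_submonoid K) ->
  exists (X : finType) (phi : M -> X -> X),
    (0 < #|X|)%N /\
    (forall k1 k2, In k1 K -> In k2 K ->
       Rle (hdist (phi (mmul k1 k2)) (phi k1 \o phi k2)) eps) /\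
    Rle (hdist (phi (mone M)) (fun x => x)) eps /\
    (forall k1 k2, In k1 K -> In k2 K -> k1 <> k2 ->
       Rle (Rminus 1 eps) (hdist (phi k1) (phi k2))).
Proof.
move=> heps sG.
have [X [phi [hX [hm [hu hs]]]]] := sG (map (lift K) K) eps heps.
exists X, (fun m => phi (lift K m)); split=> //; split; [|split].
- move=> k1 k2 h1 h2.
  have g1 : gen K k1 := gen_elt h1.
  have g2 : gen K k2 := gen_elt h2.
  have -> : lift K (mmul k1 k2) = mmul (lift K k1) (lift K k2).
    by apply: sub_eq; rewrite /= (liftE (gen_mul g1 g2)) (liftE g1) (liftE g2).
  exact: hm (in_map _ _ _ h1) (in_map _ _ _ h2).
- have -> : lift K (mone M) = mone (gen_submonoid K).
    by apply: sub_eq; rewrite /= (liftE (gen_one K)).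
  exact: hu.
- move=> k1 k2 h1 h2 hne; apply: hs (in_map _ _ _ h1) (in_map _ _ _ h2) _.
  move=> heq; apply: hne.
  by rewrite -(liftE (gen_elt h1)) heq (liftE (gen_elt h2)).
Qed.

Theorem corollary3p14 :
  (forall M : monoid, locally_residually_sofic M -> sofic M) /\
  (forall M : monoid, residually_sofic M -> sofic M).
Proof.
split; last exact: res_sofic.
move=> M HM K eps heps.
exact: (local_sofic _ K eps heps (res_sofic _ (HM K))).
Qed.
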